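(* Let $f:(M,g_M)\to(N,g_N)$ be a smooth map between Riemannian manifolds. Then $f$ is a conformal Riemannian morphism if and only if there exist a smooth function $\wedge_f:M\to\mathbb{R}^{+}$ and, for each $x\in M$, a linear subspace $H_x\subset T_xM$ with $T_xM=H_x\oplus\ker(df_x)$, such that $P_{H_x}\circ P_{H_x}=\wedge_f(x)\,P_{H_x}$ for all $x\in M$.
   Context: A linear map $T:V\to W$ between real inner-product spaces is a geometric function if there exist a subspace $C\subset V$ with $V=\ker T\oplus C$ and $r>0$ with $\langle T u,T v\rangle=r\langle u,v\rangle$ for all $u,v\in C$ ($r$ is a conformality factor). A smooth $f:(M,g_M)\to(N,g_N)$ is a conformal Riemannian morphism if there is a smooth $\wedge_f:M\to\mathbb{R}^{+}$ such that each $df_x$ is a geometric function with conformality factor $\wedge_f(x)$. For a subspace $H_x\subset T_xM$ with $H_x\oplus\ker(df_x)=T_xM$, define the linear map $(df_{H_x})^{\diamond}:T_{f(x)}N\to T_xM$ by $(df_{H_x})^{\diamond}(X)=((df_x)|_{H_x})^{*}(X)$ if $X\in\mathrm{range}(df_x)$ and $(df_{H_x})^{\diamond}(X)=0$ if $X\in\mathrm{range}(df_x)^{\perp}$, where $((df_x)|_{H_x})^{*}$ is the adjoint of $(df_x)|_{H_x}:H_x\to\mathrm{range}(df_x)$ with respect to $g_M(x)$ and $g_N(f(x))$. Set $P_{H_x}=(df_{H_x})^{\diamond}\circ df_x:T_xM\to T_xM$. *)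

(* Defs.v *)
From HB Require Import structures.
From mathcomp Require Import all_boot all_order all_algebra.
From mathcomp Require Import boolp classical_sets reals.
Set Implicit Arguments. Unset Strict Implicit. Unset Printing Implicit Defensive.
Import Order.TTheory GRing.Theory Num.Theory.
Local Open Scope ring_scope.

Section Defs.
Variable R : realType.

(* Tangent vectors are row vectors; a linear map T : R^m -> R^n is v |-> v *m T. *)
Definition ip {k : nat} (g : 'M[R]_k) (u v : 'rV[R]_k) : R := (u *m g *m v^T) 0 0.

Definition is_inner_product {k : nat} (g : 'M[R]_k) : Prop :=
  g^T = g /\ forall v : 'rV[R]_k, v != 0 -> 0 < ip g v v.

(* V = A (+) B, subspaces represented by row spaces *)
Definition direct_complement {k : nat} (A B : 'M[R]_k) : Prop :=
  row_full (A + B)%MS /\ mxdirect (A + B)%MS.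

Definition geometric_function {m n : nat} (g : 'M[R]_m) (h : 'M[R]_n)
  (T : 'M[R]_(m, n)) (r : R) : Prop :=
  exists C : 'M[R]_m, direct_complement (kermx T) C /\ 0 < r /\
    forall u v : 'rV[R]_m, (u <= C)%MS -> (v <= C)%MS ->
      ip h (u *m T) (v *m T) = r * ip g u v.

(* Specification of (dT_H)^diamond : adjoint of T|_H : H -> range T on range T,
   zero on (range T)^perp *)
Definition diamond_spec {m n : nat} (g : 'M[R]_m) (h : 'M[R]_n)
  (T : 'M[R]_(m, n)) (H : 'M[R]_m) (D : 'M[R]_(n, m)) : Prop :=
  (forall X : 'rV[R]_n, (X <= T)%MS ->
      (X *m D <= H)%MS /\
      forall y : 'rV[R]_m, (y <= H)%MS -> ip g y (X *m D) = ip h (y *m T) X) /\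
  (forall X : 'rV[R]_n, (forall Y : 'rV[R]_n, (Y <= T)%MS -> ip h X Y = 0) ->
      X *m D = 0).

Definition diamond {m n : nat} (g : 'M[R]_m) (h : 'M[R]_n)
  (T : 'M[R]_(m, n)) (H : 'M[R]_m) : 'M[R]_(n, m) :=
  xget 0 [set D | diamond_spec g h T H D].

(* P_H = (dT_H)^diamond o T, as a matrix acting on row vectors *)
Definition P_H {m n : nat} (g : 'M[R]_m) (h : 'M[R]_n)
  (T : 'M[R]_(m, n)) (H : 'M[R]_m) : 'M[R]_m := T *m diamond g h T H.

(* conformal Riemannian morphism, with the manifold data abstracted:
   gM x = metric on T_xM, gN y = metric on T_yN, df x = differential at x,
   smooth = the smoothness predicate for functions M -> R *)
Definition conformal_riemannian_morphism {m n : nat} {M N : Type}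
  (smooth : (M -> R) -> Prop) (gM : M -> 'M[R]_m) (gN : N -> 'M[R]_n)
  (f : M -> N) (df : M -> 'M[R]_(m, n)) : Prop :=
  exists lam : M -> R, smooth lam /\ (forall x, 0 < lam x) /\
    forall x, geometric_function (gM x) (gN (f x)) (df x) (lam x).

End Defs.

(* Main.v *)
Require Import Defs.
From HB Require Import structures.
From mathcomp Require Import all_boot all_order all_algebra.
From mathcomp Require Import boolp classical_sets reals.
Import Order.TTheory GRing.Theory Num.Theory.
Local Open Scope ring_scope.

Section Aux.
Variable R : realType.

Lemma ipB k (g : 'M[R]_k) y a b : ip g y (a - b) = ip g y a - ip g y b.
Proof. by rewrite /ip linearB mulmxBr !mxE. Qed.

Lemma ipZ k (g : 'M[R]_k) y c a : ip g y (c *: a) = c * ip g y a.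
Proof. by rewrite /ip linearZ -scalemxAr !mxE. Qed.

Lemma ip0r k (g : 'M[R]_k) y : ip g y 0 = 0.
Proof. by rewrite /ip trmx0 mulmx0 mxE. Qed.

Lemma ip_eq0 k (g : 'M[R]_k) z : is_inner_product g -> ip g z z = 0 -> z = 0.
Proof.
move=> [_ hpd] hz; apply/eqP; apply/negPn/negP => /hpd.
by rewrite hz ltxx.
Qed.

Lemma dc_sym k (A B : 'M[R]_k) : direct_complement A B -> direct_complement B A.
Proof.
move=> [hf hd]; split; first by rewrite addsmxC.
by apply/mxdirect_addsP; rewrite capmxC; apply/mxdirect_addsP.
Qed.

Lemma diamond_exists m n (g : 'M[R]_m) (h : 'M[R]_n) T H :
  is_inner_product g -> is_inner_product h ->
  exists D, diamond_spec g h T H D.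
Proof.
move=> [gs gpd] [hs hpd].
set B := row_base H.
have eB : (B :=: H)%MS := eq_row_base H.
have Bfree : row_free B := row_base_free H.
clearbody B.
set G := B *m g *m B^T.
have Gu : G \in unitmx.
  rewrite unitmxE unitfE; apply/negP => /det0P [v vn0 vG].
  have vB0 : v *m B = 0.
    apply: (ip_eq0 _ _ _ (conj gs gpd)).
    rewrite /ip trmx_mul.
    have -> : v *m B *m g *m (B^T *m v^T) = v *m G *m v^T by rewrite /G !mulmxA.
    by rewrite vG mul0mx mxE.
  move: vn0; rewrite -(mul0mx _ B) in vB0.
  have inj := row_free_inj Bfree.
  by rewrite (inj _ _ _ vB0) eqxx.
have GT : G^T = G by rewrite /G trmx_mul (trmx_mul B g) trmxK gs mulmxA.
have key : B *m g *m B^T *m invmx G = 1%:M by rewrite -/G mulmxV.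
exists (h *m (B *m T)^T *m invmx G *m B); split.
  move=> X _; split.
    by rewrite mulmxA; apply: submx_trans (submxMl _ _) _; rewrite eB.
  move=> y yH.
  have yB : (y <= B)%MS by rewrite eB.
  rewrite -(mulmxKpV yB) /ip.
  set b := y *m pinvmx B.
  have -> : (X *m (h *m (B *m T)^T *m invmx G *m B))^T
      = B^T *m invmx G *m (B *m T *m h *m X^T).
    by rewrite !trmx_mul !trmxK trmx_inv GT hs !mulmxA.
  have -> : b *m B *m g *m (B^T *m invmx G *m (B *m T *m h *m X^T))
      = b *m (B *m g *m B^T *m invmx G) *m (B *m T *m h *m X^T).
    by rewrite !mulmxA.
  by rewrite key mulmx1 !mulmxA.
move=> X hX.
rewrite !mulmxA.
suff -> : X *m h *m (B *m T)^T = 0 by rewrite !mul0mx.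
apply/rowP => j.
have := hX (row j (B *m T)) (submx_trans (row_sub _ _) (submxMl _ _)).
rewrite /ip => E; rewrite [RHS]mxE -E [RHS]mxE [LHS]mxE; apply: eq_bigr => i _.
by rewrite !mxE.
Qed.

Lemma P_spec m n (g : 'M[R]_m) (h : 'M[R]_n) T H :
  is_inner_product g -> is_inner_product h -> forall v : 'rV_m,
  (v *m P_H g h T H <= H)%MS /\
  forall y, (y <= H)%MS -> ip g y (v *m P_H g h T H) = ip h (y *m T) (v *m T).
Proof.
move=> hg hh v.
have [D hD] := diamond_exists _ _ _ _ T H hg hh.
have hx : diamond_spec g h T H (diamond g h T H) :=
  @xgetPex _ 0 (mkset (fun D => diamond_spec g h T H D)) (ex_intro _ D hD).
have [h1 _] := hx; rewrite /P_H.
rewrite mulmxA; exact: h1 (submxMl _ _).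
Qed.

Lemma eig m n (g : 'M[R]_m) (h : 'M[R]_n) T H (r : R) :
  is_inner_product g -> is_inner_product h -> forall c : 'rV_m, (c <= H)%MS ->
  (forall y, (y <= H)%MS -> ip h (y *m T) (c *m T) = r * ip g y c) ->
  c *m P_H g h T H = r *: c.
Proof.
move=> hg hh c cH hc.
have [PH Pip] := P_spec _ _ _ _ T H hg hh c.
apply/eqP; rewrite -subr_eq0; apply/eqP.
have zH : (c *m P_H g h T H - r *: c <= H)%MS.
  by rewrite addmx_sub // ?eqmx_opp scalemx_sub.
apply: (ip_eq0 _ _ _ hg).
by rewrite ipB ipZ Pip // hc // subrr.
Qed.

End Aux.

Theorem mainTheorem3 (R : realType) (m n : nat) (M N : Type)
  (smooth : (M -> R) -> Prop)
  (gM : M -> 'M[R]_m) (gN : N -> 'M[R]_n) (f : M -> N) (df : M -> 'M[R]_(m, n))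
  (hgM : forall x, is_inner_product (gM x))
  (hgN : forall y, is_inner_product (gN y)) :
  conformal_riemannian_morphism smooth gM gN f df <->
  exists lam : M -> R, smooth lam /\ (forall x, 0 < lam x) /\
    exists H : M -> 'M[R]_m, forall x,
      direct_complement (H x) (kermx (df x)) /\
      P_H (gM x) (gN (f x)) (df x) (H x) *m P_H (gM x) (gN (f x)) (df x) (H x)
        = lam x *: P_H (gM x) (gN (f x)) (df x) (H x).
Proof.
split.
  move=> [lam [sm [pos geo]]]; exists lam; split=> //; split=> //.
  have [H hH] := choice geo.
  exists H => x; have [dc [_ iso]] := hH x; split; first exact: dc_sym.
  apply/row_matrixP => i.
  set P := P_H _ _ _ _.
  have rZ : row i (lam x *: P) = lam x *: row i P by apply/rowP => j; rewrite !mxE.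
  rewrite row_mul rZ.
  have cH : (row i P <= H x)%MS.
    have [PH _] := @P_spec R m n _ _ (df x) (H x) (hgM x) (hgN (f x)) (row i 1%:M).
    by rewrite -row_mul mul1mx in PH.
  apply: eig => // y yH; exact: iso.
move=> [lam [sm [pos [H hH]]]]; exists lam; split=> //; split=> // x.
have [dc PP] := hH x.
exists (H x); split; first exact: dc_sym.
split; first exact: pos.
move=> u v uH vH.
set P := P_H _ _ _ _ in PP.
have [vPH Pip] := @P_spec R m n _ _ (df x) (H x) (hgM x) (hgN (f x)) v.
set z := v *m P - lam x *: v.
have zH : (z <= H x)%MS by rewrite addmx_sub // ?eqmx_opp scalemx_sub.
have zP : z *m P = 0.
  by rewrite /z mulmxBl -scalemxAl -mulmxA PP -scalemxAr subrr.
have [zPH zPip] := @P_spec R m n _ _ (df x) (H x) (hgM x) (hgN (f x)) z.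
have zT : z *m df x = 0.
  apply: (ip_eq0 _ _ _ _ (hgN (f x))).
  by rewrite -zPip // zP ip0r.
have z0 : z = 0.
  have [_ /mxdirect_addsP capH] := dc.
  apply/eqP; rewrite -submx0 -capH sub_capmx zH /=.
  exact/sub_kermxP.
have vPe : v *m P = lam x *: v by apply/eqP; rewrite -subr_eq0 -/z z0.
by rewrite -Pip // vPe ipZ.
Qed.
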